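(* Let $k,j\ge1$ and let $Y_k=\mathrm{diag}(y_k(x_0),\dots,y_k(x_{N-1}))$ and $Y_j=\mathrm{diag}(y_j(x_0),\dots,y_j(x_{N-1}))$ be diagonal matrices of samples of smooth periodic functions $y_k,y_j$. Then $$\mathrm{ht}([Y_kD_k,Y_jD_j])\le k+j-1.$$
   Context: Uniform periodic grid $x_i=a+(b-a)\frac iN$, $i=0,\dots,N-1$. $D_F=N\cdot M$ where $M$ is the $N\times N$ circulant matrix with $-1$ on the diagonal, $1$ on the superdiagonal and $1$ in the bottom-left corner; $D_B=-D_F^\dagger$; $D_2=D_BD_F=D_FD_B$. $D_k=D_2^{k/2}$ for $k$ even and $D_k=D_FD_2^{(k-1)/2}$ for $k$ odd. An $N\times N$ matrix $P$ (family indexed by $N$) has height $m$ if $m$ is the highest order such that $\|P\|_2$ grows as $N^m$ as $N\to\infty$; $\mathrm{ht}(P)\le m$ means $\|P\|_2=O(N^m)$. *)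

(* Defs.v *)
From HB Require Import structures.
From mathcomp Require Import all_boot all_order all_algebra.
From mathcomp Require Import all_classical all_reals all_analysis.
Set Implicit Arguments. Unset Strict Implicit. Unset Printing Implicit Defensive.
Import Order.TTheory GRing.Theory Num.Theory.
Local Open Scope ring_scope.
Local Open Scope classical_set_scope.

Section Defs.
Variable R : realType.

Definition is_smooth (f : R -> R) : Prop :=
  forall (n : nat) (x : R), derivable (derive1n n f) x 1.

Definition is_periodic (p : R) (f : R -> R) : Prop := forall x, f (x + p) = f x.

Definition gridpt (a b : R) (N i : nat) : R := a + (b - a) * (i%:R / N%:R).

Definition sampleDiag (a b : R) (y : R -> R) (N : nat) : 'M[R]_N :=
  \matrix_(i < N, j < N) (if i == j then y (gridpt a b N i) else 0).

Definition circM (N : nat) : 'M[R]_N :=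
  \matrix_(i < N, j < N)
    ((if (j : nat) == ((i + 1) %% N)%N then 1 else 0) - (if i == j then 1 else 0)).

Definition DF (N : nat) : 'M[R]_N := N%:R *: circM N.
Definition DB (N : nat) : 'M[R]_N := - (DF N)^T.
Definition D2 (N : nat) : 'M[R]_N := DB N *m DF N.
Definition Dk (k N : nat) : 'M[R]_N :=
  if odd k then DF N *m (D2 N ^+ k./2) else D2 N ^+ k./2.

Definition commut (N : nat) (A B : 'M[R]_N) : 'M[R]_N := A *m B - B *m A.

Definition vnorm2 (n : nat) (v : 'cV[R]_n) : R := Num.sqrt (\sum_i v i 0 ^+ 2).
Definition opnorm2 (m n : nat) (A : 'M[R]_(m, n)) : R :=
  sup [set r | exists v : 'cV[R]_n, vnorm2 v <= 1 /\ r = vnorm2 (A *m v)].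

Definition ht_le (P : forall N : nat, 'M[R]_N) (m : nat) : Prop :=
  exists (C : R) (N0 : nat), forall N : nat, (N0 <= N)%N ->
    opnorm2 (P N) <= C * N%:R ^+ m.
End Defs.

(* Main.v *)
Require Import Defs.
From HB Require Import structures.
From mathcomp Require Import all_boot all_order all_algebra.
From mathcomp Require Import all_classical all_reals all_analysis.
From mathcomp Require Import ring lra.
Set Implicit Arguments. Unset Strict Implicit. Unset Printing Implicit Defensive.
Import Order.TTheory GRing.Theory Num.Theory numFieldNormedType.Exports.
Local Open Scope ring_scope.

Section Bnd.
Variable R : realType.
Local Open Scope classical_set_scope.

Definition ns (n : nat) (v : 'cV[R]_n) : R := \sum_i v i 0 ^+ 2.
Definition bnd (n : nat) (A : 'M[R]_n) (c : R) : Prop :=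
  0 <= c /\ forall v : 'cV[R]_n, ns (A *m v) <= c * ns v.

Lemma ns_ge0 n (v : 'cV[R]_n) : 0 <= ns v.
Proof. by apply: sumr_ge0 => i _; exact: sqr_ge0. Qed.

Lemma bnd_mul n (A B : 'M[R]_n) c d : bnd A c -> bnd B d -> bnd (A *m B) (c * d).
Proof.
move=> [c0 hA] [d0 hB]; split; first exact: mulr_ge0.
move=> v; rewrite -mulmxA; apply: (le_trans (hA _)).
by rewrite -mulrA ler_wpM2l.
Qed.

Lemma bnd_add n (A B : 'M[R]_n) c d : bnd A c -> bnd B d -> bnd (A + B) (2 * c + 2 * d).
Proof.
move=> [c0 hA] [d0 hB]; split; first by rewrite addr_ge0 // mulr_ge0.
move=> v; rewrite mulmxDl.
apply: (@le_trans _ _ (2 * ns (A *m v) + 2 * ns (B *m v))).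
  rewrite /ns !mulr_sumr -big_split /=; apply: ler_sum => i _.
  rewrite mxE; set x := (A *m v) i 0; set y := (B *m v) i 0.
  have := sqr_ge0 (x - y); lra.
have := hA v; have := hB v; have := ns_ge0 v; nra.
Qed.

Lemma bnd_opp n (A : 'M[R]_n) c : bnd A c -> bnd (- A) c.
Proof.
move=> [c0 hA]; split => // v; rewrite mulNmx.
apply: le_trans (hA v); rewrite /ns le_eqVlt; apply/orP; left; apply/eqP.
by apply: eq_bigr => i _; rewrite mxE sqrrN.
Qed.

Lemma bnd_sub n (A B : 'M[R]_n) c d : bnd A c -> bnd B d -> bnd (A - B) (2 * c + 2 * d).
Proof. by move=> hA hB; apply: bnd_add => //; exact: bnd_opp. Qed.

Lemma bnd_scale n (A : 'M[R]_n) (s : R) c : bnd A c -> bnd (s *: A) (s ^+ 2 * c).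
Proof.
move=> [c0 hA]; split; first by rewrite mulr_ge0 // sqr_ge0.
move=> v; rewrite -scalemxAl.
have -> : ns (s *: (A *m v)) = s ^+ 2 * ns (A *m v).
  by rewrite /ns mulr_sumr; apply: eq_bigr => i _; rewrite mxE exprMn.
by rewrite -mulrA ler_wpM2l ?sqr_ge0.
Qed.

Lemma bnd_unscale n (A : 'M[R]_n) (s : R) c : s != 0 -> bnd (s *: A) c -> bnd A (c / s ^+ 2).
Proof.
move=> s0 h; have := bnd_scale (s^-1) h; rewrite scalerA mulVf // scale1r.
by rewrite mulrC exprVn.
Qed.

Lemma bnd_le n (A : 'M[R]_n) c d : c <= d -> bnd A c -> bnd A d.
Proof.
move=> cd [c0 hA]; split; first exact: le_trans cd.
by move=> v; apply: le_trans (hA v) _; rewrite ler_wpM2r // ns_ge0.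
Qed.

Definition PW n (f : 'I_n -> 'I_n) (w : 'I_n -> R) : 'M[R]_n :=
  \matrix_(i, j) (w i * (j == f i)%:R).

Lemma PW_mulv n f w (v : 'cV[R]_n) i : (PW f w *m v) i 0 = w i * v (f i) 0.
Proof.
rewrite mxE (bigD1 (f i)) //= big1 => [|l /negbTE hl]; rewrite !mxE.
  by rewrite eqxx mulr1 addr0.
by rewrite hl mulr0 mul0r.
Qed.

Lemma bnd_PW n f w W : injective f -> 0 <= W -> (forall i, `|w i| <= W) ->
  bnd (@PW n f w) (W ^+ 2).
Proof.
move=> fi W0 hw; split; first exact: sqr_ge0.
move=> v; rewrite /ns [X in _ <= _ * X](reindex_inj fi) mulr_sumr; apply: ler_sum => i _.
rewrite PW_mulv exprMn; apply: ler_wpM2r; first exact: sqr_ge0.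
rewrite -[w i ^+ 2]real_normK ?num_real //.
by rewrite lerXn2r ?nnegrE // ?normr_ge0.
Qed.

Lemma PW_mul n f g w u : @PW n f w *m PW g u = PW (g \o f) (fun i => w i * u (f i)).
Proof.
apply/matrixP => i j; rewrite !mxE (bigD1 (f i)) //= big1 => [|l /negbTE hl].
  by rewrite !mxE eqxx mulr1 addr0 mulrA.
by rewrite !mxE hl mulr0 mul0r.
Qed.

Lemma PW_sub n f w u : @PW n f w - PW f u = PW f (fun i => w i - u i).
Proof. by apply/matrixP => i j; rewrite !mxE mulrBl. Qed.

Lemma PW_ext n f g w u : f =1 g -> w =1 u -> @PW n f w = PW g u.
Proof. by move=> fg wu; apply/matrixP => i j; rewrite !mxE fg wu. Qed.

Lemma PW_id n : @PW n id (fun _ => 1) = 1%:M.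
Proof. by apply/matrixP => i j; rewrite !mxE mul1r eq_sym. Qed.


Lemma circM_PW N : circM R N = PW (@ordS N) (fun _ => 1) - PW id (fun _ => 1).
Proof.
apply/matrixP => i j; rewrite !mxE !mul1r addn1 -!val_eqE /= !(eq_sym (val j)).
by case: (_ == _); case: (_ == _).
Qed.

Lemma circMT_PW N : (circM R N)^T = PW (@ord_pred N) (fun _ => 1) - PW id (fun _ => 1).
Proof.
apply/matrixP => i j; rewrite !mxE !mul1r addn1.
have -> : (j == ord_pred i) = (ordS j == i).
  apply/eqP/eqP => [->|<-]; [exact: ord_predK|exact: (esym (ordSK j))].
rewrite -!val_eqE /= (eq_sym (val j)).
rewrite (eq_sym _ (nat_of_ord i)); by case: (_ == _); case: (_ == _).
Qed.

Lemma diag_PW a b y N : sampleDiag a b y N = PW id (fun i : 'I_N => y (gridpt a b N i)).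
Proof. by apply/matrixP => i j; rewrite !mxE eq_sym; case: eqP => _; rewrite ?mulr1 ?mulr0. Qed.

Lemma circM_comm N : circM R N *m (circM R N)^T = (circM R N)^T *m circM R N.
Proof.
rewrite circMT_PW circM_PW !mulmxBl !mulmxBr !PW_mul.
apply/matrixP => i j; rewrite !mxE /= ordSK ord_predK; ring.
Qed.

Lemma circM_commY a b y N :
  circM R N *m sampleDiag a b y N - sampleDiag a b y N *m circM R N =
  PW (@ordS N) (fun i => y (gridpt a b N (ordS i)) - y (gridpt a b N i)).
Proof.
rewrite diag_PW circM_PW !mulmxBl !mulmxBr !PW_mul.
apply/matrixP => i j; rewrite !mxE /=; ring.
Qed.

Lemma circMT_commY a b y N :
  (circM R N)^T *m sampleDiag a b y N - sampleDiag a b y N *m (circM R N)^T =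
  PW (@ord_pred N) (fun i => y (gridpt a b N (ord_pred i)) - y (gridpt a b N i)).
Proof.
rewrite diag_PW circMT_PW !mulmxBl !mulmxBr !PW_mul.
apply/matrixP => i j; rewrite !mxE /=; ring.
Qed.


Lemma cont_bound (f : R -> R) (a b : R) : a <= b -> (forall x, derivable f x 1) ->
  exists M, 0 <= M /\ forall t, a <= t -> t <= b -> `|f t| <= M.
Proof.
move=> ab df.
have cf : {within `[a, b], continuous f}.
  by apply: derivable_within_continuous => x _; exact: df.
have [cM _ hM] := EVT_max ab cf.
have [cm _ hm] := EVT_min ab cf.
exists (Num.max `|f cM| `|f cm|); split; first by rewrite le_max normr_ge0.
move=> t ha hb; have tab : t \in `[a, b]%R by rewrite in_itv /= ha hb.
have h1 := hM t tab; have h2 := hm t tab.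
rewrite le_max; case: (lerP 0 (f t)) => h.
  by rewrite ger0_norm // (le_trans h1) // ?ler_norm.
rewrite ltr0_norm //; apply/orP; right; rewrite -normrN.
by apply: le_trans (ler_norm _); rewrite lerN2.
Qed.

Lemma lip_bound (f : R -> R) (a b : R) : a <= b -> (forall n x, derivable (derive1n n f) x 1) ->
  exists L, 0 <= L /\ forall u v, a <= u -> u <= v -> v <= b -> `|f v - f u| <= L * (v - u).
Proof.
move=> ab df.
have [L [L0 hL]] := cont_bound ab (df 1%N).
exists L; split => // u v au uv vb.
have df0 : forall x, derivable f x 1 by exact: (df 0%N).
have cf : {within `[u, v], continuous f}.
  by apply: derivable_within_continuous => x _; exact: df0.
have hd : forall x, x \in `]u, v[%R -> is_derive x 1 f (f^`() x).
  by move=> x _; rewrite derive1E; exact/derivableP/df0.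
have [c + ->] := MVT_segment uv hd cf; rewrite in_itv /= => /andP[uc cv].
rewrite normrM (ger0_norm (x := v - u)) ?subr_ge0 //; apply: ler_wpM2r; first by rewrite subr_ge0.
by have := hL c (le_trans au uc) (le_trans cv vb).
Qed.


Lemma grid_diff (y : R -> R) (a b L : R) N (i : 'I_N) : a < b ->
  is_periodic (b - a) y ->
  (forall u v, a <= u -> u <= v -> v <= b -> `|y v - y u| <= L * (v - u)) ->
  `|y (gridpt a b N (ordS i)) - y (gridpt a b N i)| <= L * (b - a) / N%:R.
Proof.
move=> ab hp hL.
have N0 : (0 < N)%N by case: N i => [[]|].
have n0 : 0 < N%:R :> R by rewrite ltr0n.
have iN : (i < N)%N := ltn_ord i.
set u := a + (b - a) * (i%:R / N%:R).
set v := a + (b - a) * ((i%:R + 1) / N%:R).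
have -> : y (gridpt a b N (ordS i)) = y v.
  rewrite /gridpt /=; case: (ltnP i.+1 N) => h.
    by rewrite modn_small // /v natr1 addrC.
  have eN : i.+1 = N by apply/eqP; rewrite eqn_leq h iN.
  have -> : (i.+1 %% N = 0)%N by rewrite eN modnn.
  rewrite mul0r mulr0 addr0 /v natr1 eN divff ?gt_eqF //.
  by rewrite mulr1 hp.
have ba : 0 < b - a by rewrite subr_gt0.
have au : a <= u.
  by rewrite /u lerDl; apply: mulr_ge0; [exact: ltW| apply: divr_ge0; [exact: ler0n|exact: ltW]].
have uv : u <= v.
  rewrite /u /v lerD2l; apply: ler_wpM2l; first exact: ltW.
  by rewrite ler_pM2r ?invr_gt0 // lerDl.
have vb : v <= b.
  rewrite /v -lerBrDl -[X in _ <= X]mulr1; apply: ler_wpM2l; first exact: ltW.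
  by rewrite ler_pdivrMr // mul1r natr1 ler_nat.
apply: le_trans (hL u v au uv vb) _.
rewrite le_eqVlt; apply/orP; left; apply/eqP.
rewrite /u /v; field; exact: lt0r_neq0.
Qed.

Lemma grid_bound (y : R -> R) (a b M : R) N (i : 'I_N) : a < b ->
  (forall t, a <= t -> t <= b -> `|y t| <= M) -> `|y (gridpt a b N i)| <= M.
Proof.
move=> ab hM; have iN : (i < N)%N := ltn_ord i.
have n0 : 0 < N%:R :> R by rewrite ltr0n; case: N i iN => [[]|].
have ba : 0 < b - a by rewrite subr_gt0.
apply: hM; rewrite /gridpt.
  by rewrite lerDl; apply: mulr_ge0; [exact: ltW| apply: divr_ge0; [exact: ler0n|exact: ltW]].
rewrite -lerBrDl -[X in _ <= X]mulr1; apply: ler_wpM2l; first exact: ltW.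
by rewrite ler_pdivrMr // mul1r ler_nat ltnW.
Qed.


Definition ordF (F : forall N : nat, 'M[R]_N) (m : nat) : Prop :=
  exists C, 0 <= C /\ forall N, (0 < N)%N -> bnd (F N) (C * N%:R ^+ (2 * m)).

Lemma ordF_ext F G m : (forall N, (0 < N)%N -> F N = G N) -> ordF F m -> ordF G m.
Proof. by move=> e [C [C0 h]]; exists C; split => // N N0; rewrite -e //; exact: h. Qed.

Lemma ordF_mul F G a b : ordF F a -> ordF G b -> ordF (fun N => F N *m G N) (a + b).
Proof.
move=> [C [C0 hC]] [D [D0 hD]]; exists (C * D); split; first exact: mulr_ge0.
move=> N N0; have := bnd_mul (hC N N0) (hD N N0).
by rewrite mulnDr exprD mulrACA.
Qed.

Lemma ordF_add F G m : ordF F m -> ordF G m -> ordF (fun N => F N + G N) m.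
Proof.
move=> [C [C0 hC]] [D [D0 hD]]; exists (2 * C + 2 * D); split.
  by rewrite addr_ge0 // mulr_ge0.
move=> N N0; apply: bnd_le (bnd_add (hC N N0) (hD N N0)).
by rewrite [X in _ <= X]mulrDl -!mulrA.
Qed.

Lemma ordF_opp F m : ordF F m -> ordF (fun N => - F N) m.
Proof. by move=> [C [C0 hC]]; exists C; split => // N N0; apply: bnd_opp; exact: hC. Qed.

Lemma ordF_sub F G m : ordF F m -> ordF G m -> ordF (fun N => F N - G N) m.
Proof. by move=> hF hG; apply: ordF_add => //; exact: ordF_opp. Qed.

Lemma ordF_unscale F m : ordF (fun N => N%:R *: F N) m.+1 -> ordF F m.
Proof.
move=> [C [C0 hC]]; exists C; split => // N N0.
have n0 : N%:R != 0 :> R by rewrite pnatr_eq0 -lt0n.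
have := bnd_unscale n0 (hC N N0).
by rewrite mulnS exprD [_ ^+ 2 * _]mulrC mulrA mulrK // ?unitfE ?expf_neq0.
Qed.

Lemma bnd0 n c : 0 <= c -> bnd (0 : 'M[R]_n) c.
Proof.
move=> c0; split => // v; rewrite mul0mx.
have -> : ns (0 : 'cV[R]_n) = 0 by rewrite /ns big1 // => i _; rewrite mxE expr0n.
by rewrite mulr_ge0 // ns_ge0.
Qed.

Lemma ordF0 m : ordF (fun N => 0) m.
Proof. by exists 0; split => // N _; rewrite mul0r; exact: bnd0. Qed.

Lemma ordF_id : ordF (fun N => 1%:M) 0.
Proof.
exists 1; split => // N _; rewrite -PW_id expr0 mulr1.
apply: bnd_le (bnd_PW (n:=N) (f:=id) (w:=fun _ => 1) (W:=1) _ _ _) => //.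
by move=> i; rewrite normr1.
Qed.

Lemma ordF_PW (f : forall N, 'I_N -> 'I_N) (w : forall N, 'I_N -> R) C m :
  0 <= C -> (forall N, injective (f N)) ->
  (forall N (i : 'I_N), `|w N i| ^+ 2 <= C * N%:R ^+ (2 * m)) ->
  ordF (fun N => PW (f N) (w N)) m.
Proof.
move=> C0 fi hw; exists C; split => // N N0.
have h0 : 0 <= C * N%:R ^+ (2 * m) by rewrite mulr_ge0 // exprn_ge0.
rewrite -[C * _]sqr_sqrtr //; apply: bnd_PW; first exact: fi.
  exact: sqrtr_ge0.
by move=> i; rewrite -ler_sqr ?nnegrE ?sqrtr_ge0 ?normr_ge0 // sqr_sqrtr.
Qed.

Lemma DB_eq N : DB R N = - (N%:R *: (circM R N)^T).
Proof. by apply/matrixP => i j; rewrite !mxE. Qed.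


Lemma ordS_inj N : injective (@ordS N). Proof. exact: can_inj (@ordSK N). Qed.
Lemma ord_pred_inj N : injective (@ord_pred N). Proof. exact: can_inj (@ord_predK N). Qed.

Lemma bnd_PW1 N (f : 'I_N -> 'I_N) : injective f -> bnd (PW f (fun _ => 1)) 1.
Proof.
move=> fi; have := bnd_PW (W:=1) (w := fun _ => 1) fi ler01 (fun i => ltac:(by rewrite normr1)).
by rewrite expr1n.
Qed.

Lemma bnd_circM N : bnd (circM R N) 4.
Proof.
rewrite circM_PW.
have h1 := @bnd_PW1 N.
apply: bnd_le (bnd_sub (h1 _ (@ordS_inj N)) (h1 _ (fun x y (e : id x = id y) => e))).
by rewrite !mulr1 -natrD.
Qed.

Lemma bnd_circMT N : bnd (circM R N)^T 4.
Proof.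
rewrite circMT_PW.
have h1 := @bnd_PW1 N.
apply: bnd_le (bnd_sub (h1 _ (@ord_pred_inj N)) (h1 _ (fun x y (e : id x = id y) => e))).
by rewrite !mulr1 -natrD.
Qed.

Lemma ordF_DF : ordF (@DF R) 1.
Proof.
exists 4; split => // N _; rewrite mulrC; apply: bnd_scale; exact: bnd_circM.
Qed.

Lemma ordF_DB : ordF (@DB R) 1.
Proof.
exists 4; split => // N _; rewrite DB_eq mulrC; apply: bnd_opp; apply: bnd_scale.
exact: bnd_circMT.
Qed.

Section WithY.
Variables (a b M L : R) (y : R -> R).
Hypothesis ab : a < b.
Hypothesis hp : is_periodic (b - a) y.
Hypothesis M0 : 0 <= M.
Hypothesis L0 : 0 <= L.
Hypothesis hM : forall t, a <= t -> t <= b -> `|y t| <= M.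
Hypothesis hL : forall u v, a <= u -> u <= v -> v <= b -> `|y v - y u| <= L * (v - u).

Let Y N := sampleDiag a b y N.

Lemma ordF_Y : ordF Y 0.
Proof.
rewrite /Y; apply: (ordF_ext (F := fun N => PW id (fun i : 'I_N => y (gridpt a b N i)))).
  by move=> N _; rewrite diag_PW.
apply: (ordF_PW (C := M ^+ 2)); first exact: sqr_ge0.
  by move=> N x z.
move=> N i; rewrite expr0 mulr1 lerXn2r ?nnegrE ?normr_ge0 //.
exact: grid_bound.
Qed.

Lemma bnd_commPW N (f : 'I_N -> 'I_N) (w : 'I_N -> R) :
  (0 < N)%N -> injective f -> (forall i, `|w i| <= L * (b - a) / N%:R) ->
  bnd ((N%:R * N%:R) *: PW f w) ((L * (b - a)) ^+ 2 * N%:R ^+ (2 * 1)).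
Proof.
move=> N0 fi hw.
have n0 : N%:R != 0 :> R by rewrite pnatr_eq0 -lt0n.
have K0 : 0 <= L * (b - a) / N%:R.
  by rewrite divr_ge0 ?ler0n // mulr_ge0 // subr_ge0 ltW.
apply: bnd_le (bnd_scale _ (bnd_PW fi K0 hw)).
rewrite le_eqVlt; apply/orP; left; apply/eqP.
rewrite muln1 expr2; field; exact: n0.
Qed.

Lemma ordF_commDF : ordF (fun N => N%:R *: (DF R N *m Y N - Y N *m DF R N)) 1.
Proof.
exists ((L * (b - a)) ^+ 2); split; first exact: sqr_ge0.
move=> N N0; rewrite /DF -scalemxAl -scalemxAr -scalerBr /Y circM_commY scalerA.
apply: bnd_commPW => //; first exact: ordS_inj.
by move=> i; apply: grid_diff.
Qed.

Lemma ordF_commDB : ordF (fun N => N%:R *: (DB R N *m Y N - Y N *m DB R N)) 1.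
Proof.
exists ((L * (b - a)) ^+ 2); split; first exact: sqr_ge0.
move=> N N0; rewrite DB_eq mulNmx mulmxN -scalemxAl -scalemxAr opprK addrC -scalerBr /Y.
rewrite -opprB circMT_commY !scalerN scalerA; apply: bnd_opp.
apply: bnd_commPW => //; first exact: ord_pred_inj.
move=> i; rewrite -distrC; have := grid_diff (ord_pred i) ab hp hL.
by rewrite ord_predK.
Qed.

Definition goodc (F : forall N : nat, 'M[R]_N) (m : nat) : Prop :=
  ordF F m /\ ordF (fun N => N%:R *: (F N *m Y N - Y N *m F N)) m.

Lemma goodc_mul F G p q : goodc F p -> goodc G q -> goodc (fun N => F N *m G N) (p + q).
Proof.
move=> [hF cF] [hG cG]; split; first exact: ordF_mul.
apply: (ordF_ext (F := fun N => F N *m (N%:R *: (G N *m Y N - Y N *m G N)) +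
                           (N%:R *: (F N *m Y N - Y N *m F N)) *m G N)).
  move=> N _; rewrite -scalemxAr -scalemxAl -scalerDr; congr (_ *: _).
  by rewrite mulmxBr mulmxBl !mulmxA addrA subrK.
apply: ordF_add; first exact: ordF_mul.
exact: (ordF_mul cF hG).
Qed.

Lemma goodc_id : goodc (fun N => 1%:M) 0.
Proof.
split; first exact: ordF_id.
apply: (ordF_ext (F := fun N => 0)); last exact: ordF0.
by move=> N _; rewrite mul1mx mulmx1 subrr scaler0.
Qed.

Lemma goodc_pow F m n : goodc F m -> goodc (fun N => F N ^+ n) (m * n).
Proof.
move=> hF; elim: n => [|n IH].
  rewrite muln0; case: goodc_id => h1 h2; split.
    by apply: ordF_ext h1 => N _; rewrite expr0.
  by apply: ordF_ext h2 => N _; rewrite expr0.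
have := goodc_mul hF IH; rewrite -mulnS => -[h1 h2]; split.
  by apply: ordF_ext h1 => N _; rewrite exprS mulmxE.
by apply: ordF_ext h2 => N _; rewrite exprS mulmxE.
Qed.

Lemma goodc_DF : goodc (@DF R) 1.
Proof. by split; [exact: ordF_DF | exact: ordF_commDF]. Qed.

Lemma goodc_DB : goodc (@DB R) 1.
Proof. by split; [exact: ordF_DB | exact: ordF_commDB]. Qed.

Lemma goodc_D2 : goodc (@D2 R) 2.
Proof. exact: (goodc_mul goodc_DB goodc_DF). Qed.

Lemma goodc_Dk k : goodc (@Dk R k) k.
Proof.
rewrite /Dk; case: (boolP (odd k)) => ok.
  have := goodc_mul goodc_DF (goodc_pow k./2 goodc_D2).
  have -> : (1 + 2 * k./2 = k)%N by rewrite mulnC muln2 -{2}(odd_double_half k) ok.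
  move=> -[h1 h2].
  by split; [apply: ordF_ext h1 | apply: ordF_ext h2] => N _.
have := goodc_pow k./2 goodc_D2.
have -> : (2 * k./2 = k)%N.
  by rewrite mulnC muln2 -{2}(odd_double_half k) (negbTE ok).
move=> -[h1 h2].
by split; [apply: ordF_ext h1 | apply: ordF_ext h2] => N _.
Qed.

End WithY.


Lemma DF_DB_comm N : GRing.comm (DF R N) (DB R N).
Proof.
rewrite /GRing.comm -!mulmxE DB_eq /DF mulmxN mulNmx -!scalemxAl -!scalemxAr.
by rewrite circM_comm.
Qed.

Lemma DF_D2_comm N : GRing.comm (DF R N) (D2 R N).
Proof. rewrite /D2 mulmxE; apply: commrM; [exact: DF_DB_comm | exact: commr_refl]. Qed.

Lemma Dk_comm1 k N : GRing.comm (DF R N) (Dk R k N) /\ GRing.comm (D2 R N) (Dk R k N).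
Proof.
have h1 := DF_D2_comm N; have h2 := commr_sym h1.
rewrite /Dk mulmxE; case: (odd k); split.
- by apply: commrM; [exact: commr_refl | exact: commrX].
- by apply: commrM => //; apply: commrX; exact: commr_refl.
- exact: commrX.
- by apply: commrX; exact: commr_refl.
Qed.

Lemma Dk_comm k j N : GRing.comm (Dk R j N) (Dk R k N).
Proof.
have [h1 h2] := Dk_comm1 k N; apply: commr_sym.
rewrite {2}/Dk mulmxE; case: (odd j).
- by apply: commrM; [exact: commr_sym | apply: commrX; exact: commr_sym].
- by apply: commrX; exact: commr_sym.
Qed.

Lemma diag_comm (a b : R) (y1 y2 : R -> R) N : GRing.comm (sampleDiag a b y1 N) (sampleDiag a b y2 N).
Proof.
rewrite /GRing.comm -mulmxE !diag_PW !PW_mul.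
by apply: PW_ext => // i; rewrite mulrC.
Qed.

Lemma comm_id (T : pzRingType) (yk yj dk dj : T) : yk * yj = yj * yk -> dk * dj = dj * dk ->
  yk * dk * (yj * dj) - yj * dj * (yk * dk) =
  yk * (dk * yj - yj * dk) * dj - yj * (dj * yk - yk * dj) * dk.
Proof.
move=> hy hd; rewrite !mulrBr !mulrBl !mulrA.
have e : yk * yj * dk * dj = yj * yk * dj * dk by rewrite hy -!mulrA hd.
by rewrite e opprB addrA subrK.
Qed.

Lemma opnorm2_le n (A : 'M[R]_n) c : bnd A c -> opnorm2 A <= Num.sqrt c.
Proof.
move=> [c0 hA]; apply: ge_sup.
  exists (vnorm2 (A *m 0)), 0; split => //.
  rewrite /vnorm2 big1 ?sqrtr0 ?ler01 // => i _; by rewrite mxE expr0n.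
move=> r [v [hv ->]]; rewrite /vnorm2; apply: ler_wsqrtr.
have hv' : ns v <= 1.
  by move: hv; rewrite /vnorm2 -[X in _ <= X -> _]sqrtr1 ler_sqrt // ler01.
apply: le_trans (hA v) _; rewrite -[X in _ <= X]mulr1; exact: ler_wpM2l.
Qed.

End Bnd.

Unset Implicit Arguments.
Local Open Scope ring_scope.

Theorem lemma4p6 (R : realType) (a b : R) (k j : nat) (yk yj : R -> R) :
  a < b -> (1 <= k)%N -> (1 <= j)%N ->
  is_smooth yk -> is_smooth yj -> is_periodic (b - a) yk -> is_periodic (b - a) yj ->
  ht_le (fun N : nat => commut (sampleDiag a b yk N *m Dk R k N)
                               (sampleDiag a b yj N *m Dk R j N))
        (k + j - 1).
Proof.
move=> ab k1 j1 sk sj pk pj.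
have [Mk [Mk0 hMk]] := cont_bound (ltW ab) (sk 0%N).
have [Mj [Mj0 hMj]] := cont_bound (ltW ab) (sj 0%N).
have [Lk [Lk0 hLk]] := lip_bound (ltW ab) sk.
have [Lj [Lj0 hLj]] := lip_bound (ltW ab) sj.
have [gk1 gk2] := goodc_Dk ab pj Lj0 hLj k.
have [gj1 gj2] := goodc_Dk ab pk Lk0 hLk j.
have oYk := ordF_Y ab Mk0 hMk.
have oYj := ordF_Y ab Mj0 hMj.
set Yk := fun N => sampleDiag a b yk N.
set Yj := fun N => sampleDiag a b yj N.
have key : ordF (fun N => N%:R *: commut (Yk N *m Dk R k N) (Yj N *m Dk R j N)) (k + j).
  apply: (ordF_ext (F := fun N =>
     Yk N *m (N%:R *: (Dk R k N *m Yj N - Yj N *m Dk R k N)) *m Dk R j N -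
     Yj N *m (N%:R *: (Dk R j N *m Yk N - Yk N *m Dk R j N)) *m Dk R k N)).
    move=> N _; rewrite -!scalemxAr -!scalemxAl -scalerBr; congr (_ *: _).
    rewrite /commut !mulmxE comm_id //; first exact: diag_comm.
    exact: Dk_comm.
  apply: ordF_sub; first exact: (ordF_mul (ordF_mul oYk gk2) gj1).
  rewrite addnC; exact: (ordF_mul (ordF_mul oYj gj2) gk1).
have e : (k + j = (k + j - 1).+1)%N by rewrite subn1 prednK // addn_gt0 k1.
rewrite e in key; have [C [C0 hC]] := ordF_unscale key.
exists (Num.sqrt C), 1%N => N N1.
apply: le_trans (opnorm2_le (hC N N1)) _.
rewrite sqrtrM // mulnC exprM sqrtr_sqr ger0_norm //.
Qed.
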